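(* For every finite-dimensional Lie superalgebra $L$, $Z^{*}(L)=Z^{\wedge}(L)$. Consequently $L$ is capable if and only if $Z^{\wedge}(L)=0$.
   Context: All algebras are over a field $\mathbb{F}$ of characteristic $\neq 2,3$. A Lie superalgebra $L$ is capable if $L\cong H/Z(H)$ for some Lie superalgebra $H$. The epicenter $Z^{*}(L)$ is the smallest graded ideal $I$ of $L$ such that $L/I$ is capable. Non-abelian tensor square: $L\otimes L$ is the Lie superalgebra generated by symbols $x\otimes y$ ($x,y$ homogeneous, $|x\otimes y|=|x|+|y|$) subject to bilinearity, $[x,x']\otimes y=x\otimes[x',y]-(-1)^{|x||x'|}x'\otimes[x,y]$, $x\otimes[y,y']=(-1)^{|y'|(|x|+|y|)}[y',x]\otimes y-(-1)^{|x||y|}[y,x]\otimes y'$, and $[x\otimes y,x'\otimes y']=-(-1)^{|x||y|}[y,x]\otimes[x',y']$. The exterior square is $L\wedge L=(L\otimes L)/(L\square L)$, where $L\square L$ is the graded ideal generated by $x\otimes y+(-1)^{|x||y|}y\otimes x$ for homogeneous $x,y$ and by $x_0\otimes x_0$ for $x_0\in L_{\bar 0}$; the image of $x\otimes y$ is written $x\wedge y$. The exterior center is $Z^{\wedge}(L)=\{x\in L: x\wedge y=0 \text{ for all } y\in L\}$. *)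

(* Defs.v *)
From HB Require Import structures.
From mathcomp Require Import all_boot all_order all_algebra.
Set Implicit Arguments. Unset Strict Implicit. Unset Printing Implicit Defensive.
Import GRing.Theory.
Local Open Scope ring_scope.

(* (-1)^(b) for b : bool (used with b = a && b' to encode (-1)^{|x||y|}). *)
Definition ssgn (F : fieldType) (b : bool) : F := if b then -1 else 1.

(* A Lie superalgebra structure on the F-module V.
   ls_par false x  <->  x is homogeneous even  (x in L_0)
   ls_par true  x  <->  x is homogeneous odd   (x in L_1)
   Parities add in Z/2 = bool with xor (addb). *)
Record lieSuper (F : fieldType) (V : lmodType F) := LieSuper {
  ls_par : bool -> V -> Prop;
  ls_br : V -> V -> V;
  ls_par0 : forall b, ls_par b 0;
  ls_parD : forall b (a : F) x y, ls_par b x -> ls_par b y -> ls_par b (a *: x + y);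
  ls_decomp : forall x, exists x0 x1, [/\ ls_par false x0, ls_par true x1 & x = x0 + x1];
  ls_disj : forall x, ls_par false x -> ls_par true x -> x = 0;
  ls_brDl : forall (a : F) x y z, ls_br (a *: x + y) z = a *: ls_br x z + ls_br y z;
  ls_brDr : forall (a : F) x y z, ls_br z (a *: x + y) = a *: ls_br z x + ls_br z y;
  ls_br_par : forall a b x y, ls_par a x -> ls_par b y -> ls_par (addb a b) (ls_br x y);
  ls_skew : forall a b x y, ls_par a x -> ls_par b y ->
      ls_br x y = - (ssgn F (a && b) *: ls_br y x);
  ls_jacobi : forall a b c x y z, ls_par a x -> ls_par b y -> ls_par c z ->
      ssgn F (a && c) *: ls_br x (ls_br y z)
    + ssgn F (b && a) *: ls_br y (ls_br z x)
    + ssgn F (c && b) *: ls_br z (ls_br x y) = 0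
}.

Section Defs.
Variable F : fieldType.

Definition is_hom (V W : lmodType F) (L : lieSuper V) (M : lieSuper W) (f : V -> W) :=
  [/\ forall (a : F) x y, f (a *: x + y) = a *: f x + f y,
      forall b x, ls_par L b x -> ls_par M b (f x)
    & forall x y, f (ls_br L x y) = ls_br M (f x) (f y)].

Definition surj (V W : Type) (f : V -> W) := forall w, exists v, f v = w.

Definition center (V : lmodType F) (L : lieSuper V) (x : V) : Prop :=
  forall y, ls_br L x y = 0.

Definition graded_ideal (V : lmodType F) (L : lieSuper V) (I : V -> Prop) :=
  [/\ I 0,
      forall (a : F) x y, I x -> I y -> I (a *: x + y),
      forall x, I x -> exists x0 x1,
          [/\ I x0, I x1, ls_par L false x0, ls_par L true x1 & x = x0 + x1]
    & forall x y, I x -> I (ls_br L x y) /\ I (ls_br L y x)].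

(* L is capable: L = H / Z(H) for some Lie superalgebra H, i.e. there is a
   surjective homomorphism H -> L whose kernel is exactly Z(H). *)
Definition capable (V : lmodType F) (L : lieSuper V) : Prop :=
  exists (W : lmodType F) (H : lieSuper W) (f : W -> V),
    [/\ is_hom H L f, surj f & forall w, f w = 0 <-> center H w].

(* L / I is capable: some (equivalently, every) quotient of L by I, i.e.
   a surjective homomorphism out of L with kernel exactly I, has a capable
   target. *)
Definition capable_quot (V : lmodType F) (L : lieSuper V) (I : V -> Prop) : Prop :=
  exists (W : lmodType F) (Q : lieSuper W) (p : V -> W),
    [/\ is_hom L Q p, surj p, (forall x, p x = 0 <-> I x) & capable Q].

Definition is_epicenter (V : lmodType F) (L : lieSuper V) (I : V -> Prop) : Prop :=
  [/\ graded_ideal L I, capable_quot L I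
    & forall J, graded_ideal L J -> capable_quot L J -> forall x, I x -> J x].

(* Exterior pairings L x L -> M: the defining relations of the non-abelian
   tensor square together with those of L \square L, i.e. the relations
   presenting L /\ L (symbol x /\ y  |->  h x y). *)
Definition ext_pairing (V W : lmodType F) (L : lieSuper V) (M : lieSuper W)
    (h : V -> V -> W) : Prop :=
  [/\ forall (c : F) x x' y, h (c *: x + x') y = c *: h x y + h x' y,
      forall (c : F) x y y', h x (c *: y + y') = c *: h x y + h x y'
    & forall a b x y, ls_par L a x -> ls_par L b y -> ls_par M (addb a b) (h x y)]
  /\ [/\ forall a a' x x' y, ls_par L a x -> ls_par L a' x' ->
        h (ls_br L x x') y = h x (ls_br L x' y) - ssgn F (a && a') *: h x' (ls_br L x y),
      forall a b b' x y y', ls_par L a x -> ls_par L b y -> ls_par L b' y' ->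
        h x (ls_br L y y') = ssgn F (b' && addb a b) *: h (ls_br L y' x) y
                             - ssgn F (a && b) *: h (ls_br L y x) y',
      forall a b a' b' x y x' y', ls_par L a x -> ls_par L b y ->
        ls_par L a' x' -> ls_par L b' y' ->
        ls_br M (h x y) (h x' y') = - (ssgn F (a && b) *: h (ls_br L y x) (ls_br L x' y')),
      forall a b x y, ls_par L a x -> ls_par L b y ->
        h x y + ssgn F (a && b) *: h y x = 0
    & forall x, ls_par L false x -> h x x = 0].

(* x /\ y = 0 in the exterior square L /\ L (the presented Lie superalgebra):
   it vanishes under every exterior pairing into every Lie superalgebra. *)
Definition wedge_zero (V : lmodType F) (L : lieSuper V) (x y : V) : Prop :=
  forall (W : lmodType F) (M : lieSuper W) (h : V -> V -> W),
    ext_pairing L M h -> h x y = 0.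

Definition ext_center (V : lmodType F) (L : lieSuper V) (x : V) : Prop :=
  forall y, wedge_zero L x y.

End Defs.

(* Main.v *)
Require Import Defs.
From HB Require Import structures.
From mathcomp Require Import all_boot all_order all_algebra.
Import GRing.Theory.
Local Open Scope ring_scope.
From mathcomp Require Import ring zify.
From Stdlib Require Import Classical ClassicalEpsilon.
Set Implicit Arguments. Unset Strict Implicit. Unset Printing Implicit Defensive.

Section Sign.
Variable F : fieldType.
Lemma ssgnD (p q : bool) : ssgn F (addb p q) = ssgn F p * ssgn F q.
Proof. by case: p; case: q; rewrite /ssgn /=; ring. Qed.
Lemma ssgnK (p : bool) : ssgn F p * ssgn F p = 1.
Proof. by case: p; rewrite /ssgn /=; ring. Qed.
Lemma ssgnKs (W : lmodType F) (p : bool) (X : W) : ssgn F p *: (ssgn F p *: X) = X.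
Proof. by rewrite scalerA ssgnK scale1r. Qed.
Lemma solve3 (W : lmodType F) (al be : F) p (X Y Z : W) :
  al *: X + be *: Y + ssgn F p *: Z = 0 ->
  Z = (- (ssgn F p * al)) *: X + (- (ssgn F p * be)) *: Y.
Proof.
move=> J.
have: ssgn F p *: Z = - (al *: X + be *: Y).
  by apply/eqP; rewrite -addr_eq0 addrC J.
move/(congr1 (fun t => ssgn F p *: t)); rewrite ssgnKs => ->.
by rewrite scalerN scalerDr !scalerA opprD !scaleNr.
Qed.
Lemma comb2 (W : lmodType F) (k1 k2 m1 m2 : F) (X Y : W) :
  k1 = m1 -> k2 = m2 -> k1 *: X + k2 *: Y = m1 *: X + m2 *: Y.
Proof. by move=> -> ->. Qed.
Lemma comb_fix (W : lmodType F) (k1 k2 k3 : F) (X Z : W) :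
  k2 = 1 -> k1 + k3 = 0 -> X = k1 *: Z + k2 *: X + k3 *: Z.
Proof. by move=> -> h; rewrite scale1r addrAC -scalerDl h scale0r add0r. Qed.
End Sign.
Ltac sgn_tac := repeat match goal with b : bool |- _ => case: b end;
  rewrite /ssgn /=; ring.

Section Basic.
Variables (F : fieldType) (V : lmodType F) (L : lieSuper V).
Local Notation br := (ls_br L).
Local Notation par := (ls_par L).

Lemma br0l z : br 0 z = 0.
Proof.
have H := ls_brDl L 1 0 0 z; rewrite scale1r addr0 scale1r in H.
by apply: (@addrI _ (br 0 z)); rewrite addr0 -H.
Qed.
Lemma br0r z : br z 0 = 0.
Proof.
have H := ls_brDr L 1 0 0 z; rewrite scale1r addr0 scale1r in H.
by apply: (@addrI _ (br z 0)); rewrite addr0 -H.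
Qed.
Lemma brDl x y z : br (x + y) z = br x z + br y z.
Proof. by have := ls_brDl L 1 x y z; rewrite !scale1r. Qed.
Lemma brDr x y z : br z (x + y) = br z x + br z y.
Proof. by have := ls_brDr L 1 x y z; rewrite !scale1r. Qed.
Lemma brZl (a : F) x z : br (a *: x) z = a *: br x z.
Proof. by have := ls_brDl L a x 0 z; rewrite !addr0 br0l addr0. Qed.
Lemma brZr (a : F) x z : br z (a *: x) = a *: br z x.
Proof. by have := ls_brDr L a x 0 z; rewrite !addr0 br0r addr0. Qed.
Lemma brNl x z : br (- x) z = - br x z.
Proof. by rewrite -scaleN1r brZl scaleN1r. Qed.
Lemma brNr x z : br z (- x) = - br z x.
Proof. by rewrite -scaleN1r brZr scaleN1r. Qed.
Lemma brBl x y z : br (x - y) z = br x z - br y z.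
Proof. by rewrite brDl brNl. Qed.
Lemma brBr x y z : br z (x - y) = br z x - br z y.
Proof. by rewrite brDr brNr. Qed.

Lemma parZ b (a : F) x : par b x -> par b (a *: x).
Proof. by move=> h; have := ls_parD a h (ls_par0 L b); rewrite addr0. Qed.
Lemma parDD b x y : par b x -> par b y -> par b (x + y).
Proof. by move=> h1 h2; have := ls_parD 1 h1 h2; rewrite scale1r. Qed.
Lemma parN b x : par b x -> par b (- x).
Proof. by move=> h; rewrite -scaleN1r; apply: parZ. Qed.
Lemma parB b x y : par b x -> par b y -> par b (x - y).
Proof. by move=> h1 h2; apply: parDD h1 (parN h2). Qed.
Lemma par_disj b x : par b x -> par (~~ b) x -> x = 0.
Proof. by case: b => /= h1 h2; [exact: ls_disj h2 h1 | exact: ls_disj h1 h2]. Qed.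
Lemma par_split b x y : par b x -> par (~~ b) y -> x + y = 0 -> x = 0 /\ y = 0.
Proof.
move=> hx hy e.
have ex : x = - y by apply/eqP; rewrite -addr_eq0 e.
have x0 : x = 0 by apply: (par_disj hx); rewrite ex; apply: parN.
by split=> //; move: e; rewrite x0 add0r.
Qed.

Lemma center_homog z : center L z -> exists z0 z1,
  [/\ center L z0, center L z1, par false z0, par true z1 & z = z0 + z1].
Proof.
move=> hz; have [z0 [z1 [h0 h1 ez]]] := ls_decomp L z; subst z.
have key : forall y b, par b y -> br z0 y = 0 /\ br z1 y = 0.
  move=> y b hy; have := hz y; rewrite brDl => e.
  have p0 := ls_br_par h0 hy; have p1 := ls_br_par h1 hy.
  case: b hy p0 p1 => hy p0 p1 /=.
    exact: (@par_split true _ _ p0 p1 e).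
  exact: (@par_split false _ _ p0 p1 e).
have all0 : forall y, br z0 y = 0 /\ br z1 y = 0.
  move=> y; have [y0 [y1 [hy0 hy1 ->]]] := ls_decomp L y.
  have [a1 a2] := key _ _ hy0; have [b1 b2] := key _ _ hy1.
  by rewrite !brDr a1 a2 b1 b2 addr0.
by exists z0, z1; split=> // y; case: (all0 y).
Qed.

Lemma center_r z y : center L z -> br y z = 0.
Proof.
move=> hz; have [z0 [z1 [c0 c1 h0 h1 ez]]] := center_homog hz; subst z.
have [y0 [y1 [hy0 hy1 ->]]] := ls_decomp L y.
rewrite /center in c0 c1; rewrite !brDl !brDr.
by rewrite (ls_skew hy0 h0) (ls_skew hy0 h1) (ls_skew hy1 h0) (ls_skew hy1 h1)
  !c0 !c1 !scaler0 !oppr0 !addr0.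
Qed.

Lemma jacR1 a a' b u u' v : par a u -> par a' u' -> par b v ->
  br (br u u') v = br u (br u' v) - ssgn F (a && a') *: br u' (br u v).
Proof.
move=> hu hu' hv.
have J := ls_jacobi hu hu' hv.
rewrite (ls_skew hv hu) brNr brZr scalerN scalerA -scaleNr in J.
rewrite (ls_skew (ls_br_par hu hu') hv) (solve3 J).
rewrite scalerDr !scalerA opprD -!scaleNr.
rewrite -[X in _ = X + _]scale1r; apply: comb2.
  by case: a a' b {hu hu' hv J} => [] [] [] /=; rewrite /ssgn /=; ring.
by case: a a' b {hu hu' hv J} => [] [] [] /=; rewrite /ssgn /=; ring.
Qed.

Lemma jacR2 a b b' u v v' : par a u -> par b v -> par b' v' ->
  br u (br v v') = ssgn F (b' && addb a b) *: br (br v' u) v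
                   - ssgn F (a && b) *: br (br v u) v'.
Proof.
move=> hu hv hv'.
have J := ls_jacobi hv' hu hv.
rewrite (ls_skew (ls_br_par hv' hu) hv) (ls_skew (ls_br_par hv hu) hv').
rewrite (ls_skew hv hu) brNr brZr scalerN scalerA -scaleNr.
rewrite (solve3 J).
rewrite !scalerN !scalerDr !scalerA !opprK -scaleNr.
by apply: comb_fix; clear; sgn_tac.
Qed.
End Basic.




Section Bilin.
Variables (F : fieldType) (V W : lmodType F) (h : V -> V -> W).
Hypothesis hl : forall (c : F) x x' y, h (c *: x + x') y = c *: h x y + h x' y.
Hypothesis hr : forall (c : F) x y y', h x (c *: y + y') = c *: h x y + h x y'.
Lemma bl0 y : h 0 y = 0.
Proof.
have H := hl 1 0 0 y; rewrite scale1r addr0 scale1r in H.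
by apply: (@addrI _ (h 0 y)); rewrite addr0 -H.
Qed.
Lemma br0 y : h y 0 = 0.
Proof.
have H := hr 1 y 0 0; rewrite scale1r addr0 scale1r in H.
by apply: (@addrI _ (h y 0)); rewrite addr0 -H.
Qed.
Lemma blD x x' y : h (x + x') y = h x y + h x' y.
Proof. by have := hl 1 x x' y; rewrite !scale1r. Qed.
Lemma brD x y y' : h x (y + y') = h x y + h x y'.
Proof. by have := hr 1 x y y'; rewrite !scale1r. Qed.
Lemma blZ (c : F) x y : h (c *: x) y = c *: h x y.
Proof. by have := hl c x 0 y; rewrite !addr0 bl0 addr0. Qed.
Lemma brZ (c : F) x y : h x (c *: y) = c *: h x y.
Proof. by have := hr c x y 0; rewrite !addr0 br0 addr0. Qed.
Lemma blN x y : h (- x) y = - h x y.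
Proof. by rewrite -scaleN1r blZ scaleN1r. Qed.
Lemma brN x y : h x (- y) = - h x y.
Proof. by rewrite -scaleN1r brZ scaleN1r. Qed.
End Bilin.

Section Cocycle.
Variables (F : fieldType) (V : lmodType F) (L : lieSuper V).
Local Notation br := (ls_br L).
Local Notation par := (ls_par L).

Definition grading (W : lmodType F) (g : bool -> W -> Prop) :=
 [/\ forall b, g b 0,
     forall b (a : F) x y, g b x -> g b y -> g b (a *: x + y),
     forall x, exists x0 x1, [/\ g false x0, g true x1 & x = x0 + x1]
   & forall x, g false x -> g true x -> x = 0].

Definition gcocycle (W : lmodType F) (g : bool -> W -> Prop) (c : V -> V -> W) :=
 [/\ grading g,
   forall (k : F) x x' y, c (k *: x + x') y = k *: c x y + c x' y,
   forall (k : F) x y y', c x (k *: y + y') = k *: c x y + c x y' &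
   forall a b x y, par a x -> par b y -> g (addb a b) (c x y)] /\
  ((forall a b x y, par a x -> par b y -> c x y + ssgn F (a && b) *: c y x = 0) /\
   forall a b d x y z, par a x -> par b y -> par d z ->
     ssgn F (a && d) *: c x (br y z) + ssgn F (b && a) *: c y (br z x)
     + ssgn F (d && b) *: c z (br x y) = 0).

Definition killed (W : lmodType F) (c : V -> V -> W) :=
  forall x, ext_center L x -> forall y, c x y = 0.

Lemma ext_cocycle (W : lmodType F) (M : lieSuper W) h :
  ext_pairing L M h -> gcocycle (ls_par M) h.
Proof.
move=> [[hl hr hp] [r1 r2 r3 r4 r5]].
split; first (split=> //;
  by split; [exact: ls_par0 | exact: ls_parD | exact: ls_decomp | exact: ls_disj]).
split=> //.
move=> a b d x y z hx hy hz.
have T := r1 _ _ _ _ z hx hy.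
have Z := r4 _ _ _ _ hz (ls_br_par hx hy).
rewrite (ls_skew hx hz) (brN hr) (brZ hr) in T.
have eZ : h z (br x y) = - (ssgn F (d && addb a b) *: h (br x y) z).
  by apply/eqP; rewrite -addr_eq0 Z.
rewrite eZ T; rewrite ?(scalerN, scalerDr, scalerA, opprK).
have comb0 : forall (k1 k2 k3 k4 : F) (X Y : W), k1 = k3 -> k2 = k4 ->
   k1 *: X + k2 *: Y - (k3 *: X + k4 *: Y) = 0.
  by move=> k1 k2 k3 k4 X Y -> ->; rewrite subrr.
by apply: comb0; clear; sgn_tac.
Qed.
End Cocycle.




Section Prod.
Variables (F : fieldType) (V : lmodType F) (L : lieSuper V).
Variables (W1 W2 : lmodType F) (g1 : bool -> W1 -> Prop) (g2 : bool -> W2 -> Prop).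
Variables (c1 : V -> V -> W1) (c2 : V -> V -> W2).

Definition pg (b : bool) (w : (W1 * W2)%type) := g1 b w.1 /\ g2 b w.2.
Definition pc x y : (W1 * W2)%type := (c1 x y, c2 x y).

Lemma prod_grading : grading g1 -> grading g2 -> grading pg.
Proof.
move=> [a1 b1 d1 e1] [a2 b2 d2 e2]; split.
- by move=> b; split; [apply: a1 | apply: a2].
- by move=> b a [x1 x2] [y1 y2] [hx1 hx2] [hy1 hy2]; split; [apply: b1 | apply: b2].
- move=> [x1 x2]; have [u0 [u1 [p0 p1 ->]]] := d1 x1; have [v0 [v1 [q0 q1 ->]]] := d2 x2.
  by exists (u0, v0), (u1, v1); split.
- by move=> [x1 x2] [/= h1 h2] [/= k1 k2]; rewrite (e1 _ h1 k1) (e2 _ h2 k2).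
Qed.

Lemma prod_cocycle : gcocycle L g1 c1 -> gcocycle L g2 c2 -> gcocycle L pg pc.
Proof.
move=> [[G1 l1 r1 p1] [s1 j1]] [[G2 l2 r2 p2] [s2 j2]].
split; [split|split].
- exact: prod_grading.
- by move=> k x x' y; rewrite /pc l1 l2.
- by move=> k x y y'; rewrite /pc r1 r2.
- by move=> a b x y hx hy; split; [apply: p1 | apply: p2].
- move=> a b x y hx hy.
  change ((c1 x y + ssgn F (a && b) *: c1 y x, c2 x y + ssgn F (a && b) *: c2 y x) = (0, 0)).
  by rewrite (s1 _ _ _ _ hx hy) (s2 _ _ _ _ hx hy).
- move=> a b d x y z hx hy hz.
  change ((ssgn F (a && d) *: c1 x (ls_br L y z) + ssgn F (b && a) *: c1 y (ls_br L z x)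
     + ssgn F (d && b) *: c1 z (ls_br L x y),
     ssgn F (a && d) *: c2 x (ls_br L y z) + ssgn F (b && a) *: c2 y (ls_br L z x)
     + ssgn F (d && b) *: c2 z (ls_br L x y)) = (0, 0)).
  by rewrite (j1 _ _ _ _ _ _ hx hy hz) (j2 _ _ _ _ _ _ hx hy hz).
Qed.

Lemma prod_killed : killed L c1 -> killed L c2 -> killed L pc.
Proof. by move=> k1 k2 x hx y; rewrite /pc (k1 x hx y) (k2 x hx y). Qed.
End Prod.


Section VS.
Variables (F : fieldType) (V : vectType F).

Lemma vspace_of_pred (P : V -> Prop) : P 0 ->
  (forall (a : F) x y, P x -> P y -> P (a *: x + y)) ->
  exists U : {vspace V}, forall x, x \in U <-> P x.
Proof.
move=> P0 PD.
suff: forall n (U : {vspace V}), (forall x, x \in U -> P x) ->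
    (\dim {:V} - \dim U <= n)%N -> exists U' : {vspace V}, forall x, x \in U' <-> P x.
  by move=> /(_ _ 0%VS) H; apply: (H _ _ (leqnn _)) => x; rewrite memv0 => /eqP ->.
elim=> [|n IH] U sUP hd.
  exists U => x; split; first exact: sUP.
  move=> Px; have: U == fullv.
    by rewrite eqEdim subvf /=; lia.
  by move/eqP => ->; rewrite memvf.
case: (classic (forall x, P x -> x \in U)) => [hall|].
  by exists U => x; split; [exact: sUP | exact: hall].
move=> /not_all_ex_not. case=> x hx. have [Px xU] := imply_to_and _ _ hx.
have xU' : x \notin U by apply/negP.
pose U2 := (U + <[x]>)%VS.
apply: (IH U2).
  move=> z /memv_addP [u uU [v /vlineP [k ->] ->]].
  by rewrite addrC; apply: PD => //; apply: sUP.
have sub : (U <= U2)%VS by apply: addvSl.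
have x2 : x \in U2 by apply: (subvP (addvSr U _)); apply: memv_line.
have lt : (\dim U < \dim U2)%N.
  rewrite ltnNge; apply/negP => le.
  have : U == U2 by rewrite eqEdim sub le.
  by move/eqP => e; move: xU'; rewrite e x2.
have := dimvS (subvf U2); lia.
Qed.

Lemma dim_strict (U U' : {vspace V}) x :
  (forall z, z \in U' -> z \in U) -> x \in U -> x \notin U' -> (\dim U' < \dim U)%N.
Proof.
move=> s xU xU'.
have sub : (U' <= U)%VS by apply/subvP.
rewrite ltnNge; apply/negP => le.
have : U' == U by rewrite eqEdim sub le.
by move/eqP => e; move: xU'; rewrite e xU.
Qed.
End VS.


Section Good.
Variables (F : fieldType) (V : vectType F) (L : lieSuper V).

Definition goodc := exists (W : lmodType F) (g : bool -> W -> Prop) (c : V -> V -> W),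
  [/\ gcocycle L g c, killed L c & forall x, (forall y, c x y = 0) -> ext_center L x].

Lemma Kc_vspace (W : lmodType F) g (c : V -> V -> W) : gcocycle L g c ->
  exists U : {vspace V}, forall x, x \in U <-> (forall y, c x y = 0).
Proof.
move=> [[_ hl _ _] _]; apply: vspace_of_pred.
  by move=> y; apply: (bl0 hl).
by move=> a x y hx hy z; rewrite hl hx hy scaler0 addr0.
Qed.

Lemma descent n : forall (W : lmodType F) g (c : V -> V -> W), gcocycle L g c -> killed L c ->
  forall U : {vspace V}, (forall x, x \in U <-> (forall y, c x y = 0)) -> (\dim U < n)%N ->
  goodc.
Proof.
elim: n => [|n IH] W g c gc kc U hU ltU; first by [].
case: (classic (forall x, (forall y, c x y = 0) -> ext_center L x)) => [hall|].
  by exists W, g, c; split.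
move=> nall; have [x hx] := not_all_ex_not _ _ nall.
have [Kx nZ] := imply_to_and _ _ hx.
have [y n1] := not_all_ex_not _ _ nZ.
rewrite /wedge_zero in n1.
pose proof (not_all_ex_not _ _ n1) as n1'. destruct n1' as [W2 n2].
pose proof (not_all_ex_not _ _ n2) as n2'. destruct n2' as [M n3].
pose proof (not_all_ex_not _ _ n3) as n3'. destruct n3' as [h hh].
have [ep hxy] := imply_to_and _ _ hh.
have gc' := prod_cocycle gc (ext_cocycle ep).
have kc' : killed L (pc c h).
  apply: prod_killed; first exact: kc.
  by move=> x' hx' y'; apply: (hx' y' _ _ h ep).
have [U' hU'] := Kc_vspace gc'.
apply: (IH _ _ _ gc' kc' U' hU').
have lt : (\dim U' < \dim U)%N.
  apply: (@dim_strict _ _ U U' x).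
  - move=> z /hU' Kz; apply/hU => y'; exact: (congr1 fst (Kz y')).
  - by apply/hU.
  - apply/negP => /hU' Kx'; apply: hxy; exact: (congr1 snd (Kx' y)).
lia.
Qed.

Lemma good_exists : goodc.
Proof.
have gc0 : gcocycle L (ls_par L) (fun _ _ => (0 : V)).
  split; [split|split].
  - by split; [exact: ls_par0 | exact: ls_parD | exact: ls_decomp | exact: ls_disj].
  - by move=> *; rewrite scaler0 addr0.
  - by move=> *; rewrite scaler0 addr0.
  - by move=> *; apply: ls_par0.
  - by move=> *; rewrite scaler0 addr0.
  - by move=> *; rewrite !scaler0 !addr0.
have [U hU] := Kc_vspace gc0.
by apply: (descent gc0 _ hU (ltnSn _)).
Qed.
End Good.


Lemma char2_cancel (F : fieldType) (W : lmodType F) (hF2 : 2 \notin [pchar F]) (t : W) :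
  t = - t -> t = 0.
Proof.
move=> e.
have n2 : (2%:R : F) != 0.
  by apply: contra hF2 => h2; rewrite inE /= h2.
have : 2%:R *: t = 0 by rewrite scaler_nat mulr2n {2}e subrr.
by move/(congr1 (fun u => (2%:R)^-1 *: u)); rewrite scalerA mulVf // scale1r scaler0.
Qed.

Section ExtBr.
Variables (F : fieldType) (hF2 : 2 \notin [pchar F]) (V : lmodType F) (L : lieSuper V).
Lemma br_ext : ext_pairing L L (ls_br L).
Proof.
split; split.
- exact: ls_brDl.
- by move=> *; rewrite ls_brDr.
- by move=> a b x y hx hy; apply: ls_br_par.
- move=> a a' x x' y hx hx'.
  have [y0 [y1 [hy0 hy1 ->]]] := ls_decomp L y.
  rewrite !(brDr, brDl) (jacR1 hx hx' hy0) (jacR1 hx hx' hy1) !scalerDr.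
  by rewrite opprD !addrA; congr (_ + _); rewrite addrAC.
- move=> a b b' x y y' hx hy hy'; exact: jacR2.
- move=> a b a' b' x y x' y' hx hy hx' hy'.
  by rewrite (ls_skew hx hy) brNl brZl.
- move=> a b x y hx hy; rewrite (ls_skew hx hy).
  by rewrite addrC subrr.
- move=> x hx; apply: (char2_cancel hF2).
  by rewrite {1}(ls_skew hx hx) /ssgn /= scale1r.
Qed.

Lemma extc_center x : ext_center L x -> center L x.
Proof. by move=> hx y; apply: (hx y _ _ _ br_ext). Qed.
End ExtBr.


Section HCons.
Variables (F : fieldType) (V : lmodType F) (L : lieSuper V).
Variables (W : lmodType F) (g : bool -> W -> Prop) (c : V -> V -> W).
Hypothesis gc : gcocycle L g c.
Local Notation br := (ls_br L).
Local Notation par := (ls_par L).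

Definition HT := (V * W)%type.
Definition parH (b : bool) (u : HT) := par b u.1 /\ g b u.2.
Definition brH (u v : HT) : HT := (br u.1 v.1, c u.1 v.1).

Let G := let: conj (And4 G _ _ _) _ := gc in G.
Let hl := let: conj (And4 _ hl _ _) _ := gc in hl.
Let hp := let: conj (And4 _ _ _ hp) _ := gc in hp.
Let hs := let: conj _ (conj hs _) := gc in hs.
Let hj := let: conj _ (conj _ hj) := gc in hj.
Let hr := let: conj (And4 _ _ hr _) _ := gc in hr.

Lemma H_par0 b : parH b 0.
Proof. by split; [apply: ls_par0 | case: G]. Qed.
Lemma H_parD b (a : F) x y : parH b x -> parH b y -> parH b (a *: x + y).
Proof.
case: x y => x1 x2 [y1 y2] [/= h1 h2] [/= k1 k2]; split => /=.
  exact: ls_parD.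
by case: G => _ GD _ _; apply: GD.
Qed.
Lemma H_decomp x : exists x0 x1, [/\ parH false x0, parH true x1 & x = x0 + x1].
Proof.
case: x => x1 x2; have [u0 [u1 [p0 p1 ->]]] := ls_decomp L x1.
case: G => _ _ Gd _; have [v0 [v1 [q0 q1 ->]]] := Gd x2.
by exists (u0, v0), (u1, v1); split.
Qed.
Lemma H_disj x : parH false x -> parH true x -> x = 0.
Proof.
case: x => x1 x2 [/= h1 h2] [/= k1 k2].
by rewrite (ls_disj h1 k1); case: G => _ _ _ Ge; rewrite (Ge _ h2 k2).
Qed.
Lemma H_brDl (a : F) x y z : brH (a *: x + y) z = a *: brH x z + brH y z.
Proof.
case: x y z => x1 x2 [y1 y2] [z1 z2].
change ((br (a *: x1 + y1) z1, c (a *: x1 + y1) z1) =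
        (a *: br x1 z1 + br y1 z1, a *: c x1 z1 + c y1 z1)).
by rewrite ls_brDl hl.
Qed.
Lemma H_brDr (a : F) x y z : brH z (a *: x + y) = a *: brH z x + brH z y.
Proof.
case: x y z => x1 x2 [y1 y2] [z1 z2].
change ((br z1 (a *: x1 + y1), c z1 (a *: x1 + y1)) =
        (a *: br z1 x1 + br z1 y1, a *: c z1 x1 + c z1 y1)).
by rewrite ls_brDr hr.
Qed.
Lemma H_br_par a b x y : parH a x -> parH b y -> parH (addb a b) (brH x y).
Proof.
case: x y => x1 x2 [y1 y2] [/= h1 h2] [/= k1 k2]; split => /=.
  exact: ls_br_par.
exact: hp.
Qed.
Lemma H_skew a b x y : parH a x -> parH b y ->
  brH x y = - (ssgn F (a && b) *: brH y x).
Proof.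
case: x y => x1 x2 [y1 y2] [/= h1 h2] [/= k1 k2].
change ((br x1 y1, c x1 y1) = (- (ssgn F (a && b) *: br y1 x1), - (ssgn F (a && b) *: c y1 x1))).
rewrite -(ls_skew h1 k1); congr (_, _).
by apply/eqP; rewrite -addr_eq0 (hs h1 k1).
Qed.
Lemma H_jacobi a b d x y z : parH a x -> parH b y -> parH d z ->
      ssgn F (a && d) *: brH x (brH y z)
    + ssgn F (b && a) *: brH y (brH z x)
    + ssgn F (d && b) *: brH z (brH x y) = 0.
Proof.
case: x y z => x1 x2 [y1 y2] [z1 z2] [/= h1 h2] [/= k1 k2] [/= l1 l2].
change ((ssgn F (a && d) *: br x1 (br y1 z1) + ssgn F (b && a) *: br y1 (br z1 x1)
    + ssgn F (d && b) *: br z1 (br x1 y1),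
    ssgn F (a && d) *: c x1 (br y1 z1) + ssgn F (b && a) *: c y1 (br z1 x1)
    + ssgn F (d && b) *: c z1 (br x1 y1)) = (0, 0)).
by rewrite (ls_jacobi h1 k1 l1) (hj h1 k1 l1).
Qed.

Definition Hls : lieSuper HT :=
  @LieSuper F HT parH brH H_par0 H_parD H_decomp H_disj H_brDl H_brDr
    H_br_par H_skew H_jacobi.
End HCons.


Lemma core (F : fieldType) (hF2 : 2 \notin [pchar F]) (V : vectType F) (L : lieSuper V)
  (WQ : lmodType F) (Q : lieSuper WQ) (p : V -> WQ) :
  is_hom L Q p -> surj p -> (forall x, p x = 0 <-> ext_center L x) -> capable Q.
Proof.
move=> [plin ppar pbr] psurj pker.
have [W [g [c [gc kc Kc]]]] := good_exists L.
exists ((V * W)%type : lmodType F), (Hls gc), (fun u => p u.1); split.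
- split.
  + by move=> a [x1 x2] [y1 y2]; apply: plin.
  + by move=> b [x1 x2] [/= h1 _]; apply: ppar.
  + by move=> [x1 x2] [y1 y2]; apply: pbr.
- move=> w; have [v <-] := psurj w; by exists (v, 0).
- move=> [x1 x2] /=; split.
  + move=> /pker hx [y1 y2].
    change ((ls_br L x1 y1, c x1 y1) = (0, 0)).
    by rewrite (extc_center hF2 hx) (kc _ hx).
  + move=> hc; apply/pker; apply: Kc => y.
    exact: (congr1 snd (hc (y, 0))).
Qed.


Section Minimal.
Variables (F : fieldType) (hF2 : 2 \notin [pchar F]) (V : lmodType F) (L : lieSuper V).
Variables (WQ : lmodType F) (Q : lieSuper WQ) (p : V -> WQ).
Variables (WH : lmodType F) (H : lieSuper WH) (f : WH -> WQ).
Hypotheses (php : is_hom L Q p) (psurj : surj p).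
Hypotheses (fhp : is_hom H Q f) (fsurj : surj f) (fker : forall w, f w = 0 <-> center H w).
Local Notation brH := (ls_br H).

Definition Gl (x : V) : WH := proj1_sig (constructive_indefinite_description _ (fsurj (p x))).
Lemma fG x : f (Gl x) = p x.
Proof. exact: proj2_sig (constructive_indefinite_description _ (fsurj (p x))). Qed.

Lemma flin (a : F) u v : f (a *: u + v) = a *: f u + f v.
Proof. by case: fhp. Qed.
Lemma plin (a : F) u v : p (a *: u + v) = a *: p u + p v.
Proof. by case: php. Qed.
Lemma fB u v : f (u - v) = f u - f v.
Proof. by rewrite addrC -scaleN1r flin scaleN1r addrC. Qed.

Lemma lift_eq u u' : f u = f u' -> forall v, brH u v = brH u' v /\ brH v u = brH v u'.
Proof.
move=> e v.
have cz : center H (u - u') by apply/fker; rewrite fB e subrr.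
have -> : u = u' + (u - u') by rewrite addrC subrK.
by rewrite brDl brDr cz (center_r _ cz) !addr0.
Qed.

Definition hp x y := brH (Gl x) (Gl y).

Lemma hE x y u v : f u = p x -> f v = p y -> hp x y = brH u v.
Proof.
move=> eu ev; rewrite /hp.
case: (lift_eq (etrans (fG x) (esym eu)) (Gl y)) => -> _.
by case: (lift_eq (etrans (fG y) (esym ev)) u) => _ ->.
Qed.

Lemma hlift a x : ls_par L a x -> exists u, ls_par H a u /\ f u = p x.
Proof.
move=> hx; have [u0 e0] := fsurj (p x).
have [e [o [pe po eu]]] := ls_decomp H u0.
case: fhp => _ fpar _.
have qx : ls_par Q a (p x) by case: php => _ pp _; apply: pp.
have qe := fpar _ _ pe; have qo := fpar _ _ po.
have ex : p x = f e + f o by rewrite -e0 eu; have := flin 1 e o; rewrite !scale1r.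
case: a hx qx => hx qx.
- exists o; split => //.
  have t0 : f e = 0.
    apply: (@par_disj _ _ Q true) => //=.
    have -> : f e = p x - f o by rewrite ex addrK.
    exact: parB.
  by rewrite ex t0 add0r.
- exists e; split => //.
  have t0 : f o = 0.
    apply: (@par_disj _ _ Q false) => //=.
    have -> : f o = p x - f e by rewrite ex addrAC subrr add0r.
    exact: parB.
  by rewrite ex t0 addr0.
Qed.

Lemma fbr u v : f (brH u v) = ls_br Q (f u) (f v).
Proof. by case: fhp. Qed.
Lemma pbr x y : p (ls_br L x y) = ls_br Q (p x) (p y).
Proof. by case: php. Qed.

Lemma hp_ext : ext_pairing L H hp.
Proof.
have [[bl br bp] [r1 r2 r3 r4 r5]] := br_ext hF2 H.
split; split.
- move=> k x x' y.
  have e1 : f (k *: Gl x + Gl x') = p (k *: x + x') by rewrite flin !fG plin.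
  by rewrite (hE e1 (fG y)) ls_brDl.
- move=> k x y y'.
  have e1 : f (k *: Gl y + Gl y') = p (k *: y + y') by rewrite flin !fG plin.
  by rewrite (hE (fG x) e1) ls_brDr.
- move=> a b x y hx hy.
  have [u [hu eu]] := hlift hx; have [v [hv ev]] := hlift hy.
  by rewrite (hE eu ev); apply: ls_br_par.
- move=> a a' x x' y hx hx'.
  have [u [hu eu]] := hlift hx; have [u' [hu' eu']] := hlift hx'.
  rewrite (@hE _ _ (brH u u') (Gl y)); last by rewrite fG.
    rewrite (@hE _ _ u (brH u' (Gl y))) //; last by rewrite fbr eu' fG pbr.
    rewrite (@hE _ _ u' (brH u (Gl y))) //; last by rewrite fbr eu fG pbr.
    exact: r1 hu hu'.
  by rewrite fbr eu eu' pbr.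
- move=> a b b' x y y' hx hy hy'.
  have [u [hu eu]] := hlift hx; have [v [hv ev]] := hlift hy.
  have [v' [hv' ev']] := hlift hy'.
  have e1 : f (brH v v') = p (ls_br L y y') by rewrite fbr ev ev' pbr.
  have e2 : f (brH v' u) = p (ls_br L y' x) by rewrite fbr ev' eu pbr.
  have e3 : f (brH v u) = p (ls_br L y x) by rewrite fbr ev eu pbr.
  rewrite (hE eu e1) (hE e2 ev) (hE e3 ev').
  exact: r2 hu hv hv'.
- move=> a b a' b' x y x' y' hx hy hx' hy'.
  have [u [hu eu]] := hlift hx; have [v [hv ev]] := hlift hy.
  have [u' [hu' eu']] := hlift hx'; have [v' [hv' ev']] := hlift hy'.
  have e1 : f (brH v u) = p (ls_br L y x) by rewrite fbr ev eu pbr.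
  have e2 : f (brH u' v') = p (ls_br L x' y') by rewrite fbr eu' ev' pbr.
  rewrite (hE eu ev) (hE eu' ev') (hE e1 e2).
  exact: r3 hu hv hu' hv'.
- move=> a b x y hx hy.
  have [u [hu eu]] := hlift hx; have [v [hv ev]] := hlift hy.
  by rewrite (hE eu ev) (hE ev eu); apply: r4.
- move=> x hx.
  have [u [hu eu]] := hlift hx.
  by rewrite (hE eu eu); apply: r5.
Qed.

Lemma minimal_core x : ext_center L x -> f (Gl x) = 0.
Proof.
move=> hx; apply/fker => w.
have [y ey] := psurj (f w).
have e : f w = f (Gl y) by rewrite fG ey.
have hxy : hp x y = 0 by apply: (hx y _ _ _ hp_ext).
case: (lift_eq e (Gl x)) => _ ->; exact: hxy.
Qed.
End Minimal.

Lemma minimal (F : fieldType) (hF2 : 2 \notin [pchar F]) (V : lmodType F) (L : lieSuper V)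
  (J : V -> Prop) : capable_quot L J -> forall x, ext_center L x -> J x.
Proof.
move=> [WQ [Q [p [php psurj pker [WH [H [f [fhp fsurj fker]]]]]]]] x hx.
apply/pker; rewrite -(fG p fsurj x).
exact: (minimal_core hF2 php psurj fhp fsurj fker hx).

Qed.




Section Transport.
Variables (F : fieldType) (V : lmodType F) (L : lieSuper V).
Variables (W : lmodType F) (p : V -> W) (brQ : W -> W -> W).
Hypothesis plin : forall (a : F) x y, p (a *: x + y) = a *: p x + p y.
Hypothesis psurj : surj p.
Hypothesis pbr : forall x y, brQ (p x) (p y) = p (ls_br L x y).
Hypothesis pdisj : forall x y, ls_par L false x -> ls_par L true y -> p x = p y -> p x = 0.
Local Notation br := (ls_br L).
Local Notation par := (ls_par L).

Definition parQ b w := exists x, par b x /\ p x = w.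

Lemma p0 : p 0 = 0.
Proof.
have H := plin 1 0 0; rewrite scale1r addr0 scale1r in H.
by apply: (@addrI _ (p 0)); rewrite addr0 -H.
Qed.
Lemma pN x : p (- x) = - p x.
Proof. by have := plin (-1) x 0; rewrite addr0 p0 addr0 !scaleN1r. Qed.

Lemma pZ (a : F) x : p (a *: x) = a *: p x.
Proof. by have := plin a x 0; rewrite addr0 p0 addr0. Qed.
Lemma pD x y : p (x + y) = p x + p y.
Proof. by have := plin 1 x y; rewrite !scale1r. Qed.

Lemma Q_par0 b : parQ b 0.
Proof. by exists 0; split; [apply: ls_par0 | apply: p0]. Qed.
Lemma Q_parD b (a : F) x y : parQ b x -> parQ b y -> parQ b (a *: x + y).
Proof.
move=> [x1 [h1 <-]] [y1 [k1 <-]]; exists (a *: x1 + y1); split; last exact: plin.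
exact: ls_parD.
Qed.
Lemma Q_decomp x : exists x0 x1, [/\ parQ false x0, parQ true x1 & x = x0 + x1].
Proof.
have [v <-] := psurj x; have [v0 [v1 [h0 h1 ->]]] := ls_decomp L v.
exists (p v0), (p v1); split; [by exists v0 | by exists v1 |].
by have := plin 1 v0 v1; rewrite !scale1r.
Qed.
Lemma Q_disj x : parQ false x -> parQ true x -> x = 0.
Proof. by move=> [x0 [h0 <-]] [x1 [h1 e]]; apply: pdisj h0 h1 (esym e). Qed.
Lemma Q_brDl (a : F) x y z : brQ (a *: x + y) z = a *: brQ x z + brQ y z.
Proof.
have [x' <-] := psurj x; have [y' <-] := psurj y; have [z' <-] := psurj z.
by rewrite -plin !pbr ls_brDl plin.
Qed.
Lemma Q_brDr (a : F) x y z : brQ z (a *: x + y) = a *: brQ z x + brQ z y.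
Proof.
have [x' <-] := psurj x; have [y' <-] := psurj y; have [z' <-] := psurj z.
by rewrite -plin !pbr ls_brDr plin.
Qed.
Lemma Q_br_par a b x y : parQ a x -> parQ b y -> parQ (addb a b) (brQ x y).
Proof.
move=> [x' [hx <-]] [y' [hy <-]]; exists (br x' y'); split; last by rewrite pbr.
exact: ls_br_par.
Qed.
Lemma Q_skew a b x y : parQ a x -> parQ b y -> brQ x y = - (ssgn F (a && b) *: brQ y x).
Proof.
move=> [x' [hx <-]] [y' [hy <-]]; rewrite !pbr (ls_skew hx hy).
rewrite pN; congr (- _).
by have := plin (ssgn F (a && b)) (br y' x') 0; rewrite addr0 p0 addr0.
Qed.
Lemma Q_jacobi a b c x y z : parQ a x -> parQ b y -> parQ c z ->
      ssgn F (a && c) *: brQ x (brQ y z)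
    + ssgn F (b && a) *: brQ y (brQ z x)
    + ssgn F (c && b) *: brQ z (brQ x y) = 0.
Proof.
move=> [x' [hx <-]] [y' [hy <-]] [z' [hz <-]]; rewrite !pbr -!pZ -!pD.
by rewrite (ls_jacobi hx hy hz) p0.
Qed.

Definition Qls : lieSuper W :=
  @LieSuper F W parQ brQ Q_par0 Q_parD Q_decomp Q_disj Q_brDl Q_brDr
    Q_br_par Q_skew Q_jacobi.

Lemma Q_hom : is_hom L Qls p.
Proof.
split => //; first by move=> b x hx; exists x.
Qed.
End Transport.


Section ExtIdeal.
Variables (F : fieldType) (hF2 : 2 \notin [pchar F]) (V : lmodType F) (L : lieSuper V).

Lemma extc0 : ext_center L 0.
Proof. by move=> y W M h [[hl _ _] _]; apply: (bl0 hl). Qed.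

Lemma extc_graded : graded_ideal L (ext_center L).
Proof.
split.
- exact: extc0.
- move=> a x y hx hy z W M h ep; case: (ep) => [[hl _ _] _].
  by rewrite hl (hx z _ _ _ ep) (hy z _ _ _ ep) scaler0 addr0.
- move=> x hx; have [x0 [x1 [h0 h1 ex]]] := ls_decomp L x.
  have key : forall y W (M : lieSuper W) h, ext_pairing L M h -> h x0 y = 0 /\ h x1 y = 0.
    move=> y W M h ep; case: (ep) => [[hl hr hp] _].
    have hom : forall b y', ls_par L b y' -> h x0 y' = 0 /\ h x1 y' = 0.
      move=> b y' hy; have e : h x0 y' + h x1 y' = 0.
        by rewrite -(blD hl) -ex (hx y' _ _ _ ep).
      have p0 := hp _ _ _ _ h0 hy; have p1 := hp _ _ _ _ h1 hy.
      case: b hy p0 p1 e => hy p0 p1 e /=.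
        exact: (@par_split _ _ M true _ _ p0 p1 e).
      exact: (@par_split _ _ M false _ _ p0 p1 e).
    have [y0 [y1 [hy0 hy1 ->]]] := ls_decomp L y.
    have [a1 a2] := hom _ _ hy0; have [b1 b2] := hom _ _ hy1.
    by rewrite !(brD hr) a1 a2 b1 b2 addr0.
  exists x0, x1; split => //.
  + by move=> y W M h ep; case: (key y W M h ep).
  + by move=> y W M h ep; case: (key y W M h ep).
- move=> x y hx; have cx := extc_center hF2 hx.
  by rewrite cx (center_r _ cx); split; apply: extc0.
Qed.
End ExtIdeal.

Section Quot.
Variables (F : fieldType) (V : vectType F) (L : lieSuper V) (I : V -> Prop).
Hypothesis gI : graded_ideal L I.

Lemma quot_exists : exists (W : lmodType F) (Q : lieSuper W) (p : V -> W),
  [/\ is_hom L Q p, surj p & forall x, p x = 0 <-> I x].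
Proof.
case: (gI) => I0 ID Idec Ibr.
have [U hU] := vspace_of_pred I0 ID.
pose pi := daddv_pi (U^C)%VS U.
pose p := fun x => vsproj (U^C)%VS (pi x).
have cap1 : (U^C :&: U = 0)%VS by rewrite capvC capv_compl.
have cap2 : (U :&: U^C = 0)%VS by rewrite capv_compl.
have full : forall x, x \in (U^C + U)%VS by move=> x; rewrite addvC addv_complf memvf.
have vp : forall x, vsval (p x) = pi x by move=> x; rewrite vsprojK // memv_pi.
have plin : forall (a : F) x y, p (a *: x + y) = a *: p x + p y.
  by move=> a x y; rewrite /p linearP linearP.
have pker : forall x, p x = 0 <-> I x.
  move=> x; split.
    move=> e; apply/hU.
    have ex := daddv_pi_add cap1 (full x).
    have : pi x = 0 by rewrite -vp e.
    rewrite /pi => e0; rewrite e0 add0r in ex; rewrite -ex; exact: memv_pi.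
  move=> /hU xU; apply: val_inj => /=; rewrite [LHS]vp /=.
  have ex := daddv_pi_add cap1 (full x).
  rewrite (daddv_pi_id cap2 xU) in ex.
  by apply: (@addIr _ x); rewrite add0r.
have pv : forall w, p (vsval w) = w.
  move=> w; rewrite /p /pi daddv_pi_id //; [exact: vsvalK | exact: subvsP].
have psurj : surj p by move=> w; exists (vsval w).
have pD : forall x y, p (x + y) = p x + p y.
  by move=> x y; have := plin 1 x y; rewrite !scale1r.
have pN : forall x, p (- x) = - p x.
  move=> x; have := plin (-1) x 0; rewrite !addr0 !scaleN1r => ->.
  by have /pker -> : I 0 by []; rewrite addr0.
have pB : forall x y, p (x - y) = p x - p y by move=> x y; rewrite pD pN.
have INeg : forall z, I z -> I (- z).
  by move=> z hz; have := ID (-1) z 0 hz I0; rewrite addr0 scaleN1r.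
have Ivp : forall x, I (vsval (p x) - x).
  by move=> x; apply/pker; rewrite pB pv subrr.
have pcl : forall a b c, I (a - b) -> p (ls_br L a c) = p (ls_br L b c).
  move=> a b c hab; apply/eqP; rewrite -subr_eq0 -pB -brBl; apply/eqP/pker.
  by case: (Ibr _ c hab).
have pcr : forall a b c, I (a - b) -> p (ls_br L c a) = p (ls_br L c b).
  move=> a b c hab; apply/eqP; rewrite -subr_eq0 -pB -brBr; apply/eqP/pker.
  by case: (Ibr _ c hab).
pose brQ := fun w1 w2 : subvs_of (U^C)%VS => p (ls_br L (vsval w1) (vsval w2)).
have pbr : forall x y, brQ (p x) (p y) = p (ls_br L x y).
  by move=> x y; rewrite /brQ (pcl _ _ _ (Ivp x)) (pcr _ _ _ (Ivp y)).
have pdisj : forall x y, ls_par L false x -> ls_par L true y -> p x = p y -> p x = 0.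
  move=> x y hx hy e.
  have Ixy : I (x - y) by apply/pker; rewrite pB e subrr.
  have [i0 [i1 [I0' I1' h0 h1 ei]]] := Idec _ Ixy.
  have e2 : x - i0 = y + i1.
    have -> : x = (i0 + i1) + y by rewrite -ei subrK.
    by rewrite addrAC [i0 + i1]addrC addrK addrC.
  have z : x - i0 = 0.
    apply: (ls_disj (parB hx h0)); rewrite e2; exact: parDD.
  by apply/pker; move/eqP: z; rewrite subr_eq0 => /eqP ->.
exists _, (Qls plin psurj pbr pdisj), p; split => //.
exact: Q_hom.
Qed.
End Quot.


Unset Implicit Arguments. Set Strict Implicit.
Theorem mainTheorem8 (F : fieldType) (hF2 : 2 \notin [pchar F]) (hF3 : 3 \notin [pchar F])
    (V : vectType F) (L : lieSuper V) :
  is_epicenter L (ext_center L) /\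
  (capable L <-> forall x, ext_center L x -> x = 0).
Proof.
have idhom : is_hom L L id by split.
have idsurj : surj (@id V) by move=> w; exists w.
split.
  split.
  - exact: extc_graded.
  - have [W [Q [p [ph ps pk]]]] := quot_exists (extc_graded hF2 L).
    exists W, Q, p; split => //.
    exact: (core hF2 ph ps pk).
  - by move=> J _ cq x hx; apply: (minimal hF2 cq).
split.
  move=> cL x hx.
  have cq : capable_quot L (fun x => x = 0).
    by exists V, L, id; split.
  exact: (minimal hF2 cq hx).
move=> h; apply: (core hF2 idhom idsurj) => x; split.
  by move=> /= ->; apply: extc0.
exact: h.
Qed.
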